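(* Let $m\ge1$, $x_0\in S^m_1$, and let $u\colon[0,\tau]\to\mathbb R^{m+1}_1$ be absolutely continuous with $\langle u(t),x_0\rangle_J=0$ for all $t$. Let $(s,R)\colon[0,\tau]\to\mathbb R^{m+1}\times GL(m+1)$ be the absolutely continuous solution of $$\dot s(t)=u(t),\qquad \dot R(t)=R(t)\big(u(t)x_0^{\mathbf t}-x_0u(t)^{\mathbf t}\big)J,\qquad s(0)=0,\ R(0)=I_{m+1}.$$ Then $R(t)\in O^{++}_1(m+1)$ for all $t$, and with $x(t)=R(t)x_0$ and $g(t)=(s(t),R(t)^{-1})$, the curve $(x,g)$ is a $G$-rolling of $M=S^m_1$ on $\widehat M=T^{\mathrm{aff}}_{x_0}S^m_1$ without slipping or twisting (for any of the three choices of $G_1(m+1)$), with development $\widehat x(t)=s(t)+x_0$.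
   Context: $\mathbb R^{m+1}_1$ is $\mathbb R^{m+1}$ with $\langle x,y\rangle_J=x^{\mathbf t}Jy$, $J=\mathrm{diag}(-1,I_m)$. The Lorentzian sphere is $S^m_1=\{x\in\mathbb R^{m+1}_1:\langle x,x\rangle_J=1\}$; $T_{x_0}S^m_1=\{v:\langle v,x_0\rangle_J=0\}$ and $T^{\mathrm{aff}}_{x_0}S^m_1=x_0+T_{x_0}S^m_1$ (the affine tangent space, a pseudo-Riemannian submanifold of the same dimension and index). $O_1(m+1)=\{X:X^{\mathbf t}JX=J\}$; writing $X$ in blocks with upper-left $1\times1$ block $X_T$ and lower-right $m\times m$ block $X_S$, $O^{++}_1(m+1)$ is the set with $X_T>0$ and $\det X_S>0$. $G_1(m+1)$ is one of $O^{++}\cup O^{--}$, $O^{++}\cup O^{+-}$, $O^{++}\cup O^{-+}$ (corresponding to orientation, time-orientation, space-orientation). The group $\mathbb R^{m+1}_1\rtimes G_1(m+1)$ acts by $(s,A)x=s+Ax$, so $d_xg=A$ for $g=(s,A)$. Definition (rolling). For connected $G$-oriented pseudo-Riemannian submanifolds $M,\widehat M\subset\mathbb R^n_\nu$ of equal dimension and index, a $G$-rolling of $M$ on $\widehat M$ without slipping or twisting is an absolutely continuous curve $(x,g)\colon[0,\tau]\to M\times(\mathbb R^n_\nu\rtimes G_\nu(n))$ such that for a.e. $t$: (i) $\widehat x(t):=g(t)x(t)\in\widehat M$; (ii) $d_{x(t)}g(t)T_{x(t)}M=T_{\widehat x(t)}\widehat M$; (iii) $d_{x(t)}g(t)|_{T_{x(t)}M}$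 preserves $G$-orientation; (iv) $\dot{\widehat x}(t)=d_{x(t)}g(t)\dot x(t)$; (v) $d_{x(t)}g(t)\frac{D}{dt}Z=\frac{D}{dt}(d_{x(t)}g(t)Z)$ for every tangent field $Z$ along $x$; (vi) $d_{x(t)}g(t)\frac{D^\perp}{dt}\Psi=\frac{D^\perp}{dt}(d_{x(t)}g(t)\Psi)$ for every normal field $\Psi$ along $x$. Here $\frac{D}{dt}$ is the tangential projection of the ambient derivative and $\frac{D^\perp}{dt}$ the normal projection. *)

(* Defs.v *)
(* Vectors of R^{m+1} are
   functions nat -> R (only indices 0..m matter), matrices are nat -> nat -> R
   (only indices 0..m matter).  All equalities of vectors/matrices are
   entrywise on the indices 0..m. *)
From Stdlib Require Import Reals.
Open Scope R_scope.

Definition vec := nat -> R.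
Definition mat := nat -> nat -> R.

Definition Jsign (i : nat) : R := match i with O => -1 | _ => 1 end.

Definition dotJ (m : nat) (x y : vec) : R :=
  sum_f_R0 (fun i => Jsign i * x i * y i) m.

Definition vzero : vec := fun _ => 0.
Definition vadd (x y : vec) : vec := fun i => x i + y i.
Definition vsub (x y : vec) : vec := fun i => x i - y i.

Definition vecEq (m : nat) (x y : vec) : Prop :=
  forall i, (i <= m)%nat -> x i = y i.
Definition matEq (m : nat) (A B : mat) : Prop :=
  forall i j, (i <= m)%nat -> (j <= m)%nat -> A i j = B i j.

Definition mv (m : nat) (A : mat) (x : vec) : vec :=
  fun i => sum_f_R0 (fun j => A i j * x j) m.
Definition mm (m : nat) (A B : mat) : mat :=
  fun i k => sum_f_R0 (fun j => A i j * B j k) m.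
Definition trm (A : mat) : mat := fun i j => A j i.
Definition Imat : mat := fun i j => if Nat.eqb i j then 1 else 0.
Definition Jmat : mat := fun i j => if Nat.eqb i j then Jsign i else 0.
Definition wedge (u x0 : vec) : mat := fun i j => u i * x0 j - x0 i * u j.

(* determinant of the n x n matrix with entries A i j, 0 <= i,j < n,
   by Laplace expansion along the first row *)
Definition minor0 (j : nat) (A : mat) : mat :=
  fun i k => A (S i) (if Nat.ltb k j then k else S k).
Fixpoint det (n : nat) (A : mat) : R :=
  match n with
  | O => 1
  | S n' => sum_f_R0 (fun j => (-1) ^ j * A O j * det n' (minor0 j A)) n'
  end.

Definition blockT (X : mat) : R := X O O.
Definition blockS (X : mat) : mat := fun i j => X (S i) (S j).

Definition GLmat (m : nat) (X : mat) : Prop :=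
  exists Y, matEq m (mm m X Y) Imat /\ matEq m (mm m Y X) Imat.

Definition O1 (m : nat) (X : mat) : Prop :=
  matEq m (mm m (trm X) (mm m Jmat X)) Jmat.
Definition Opp (m : nat) (X : mat) : Prop :=
  O1 m X /\ 0 < blockT X /\ 0 < det m (blockS X).
Definition Omm (m : nat) (X : mat) : Prop :=
  O1 m X /\ blockT X < 0 /\ det m (blockS X) < 0.
Definition Opm (m : nat) (X : mat) : Prop :=
  O1 m X /\ 0 < blockT X /\ det m (blockS X) < 0.
Definition Omp (m : nat) (X : mat) : Prop :=
  O1 m X /\ blockT X < 0 /\ 0 < det m (blockS X).

Inductive Gchoice := Gorient | Gtime | Gspace.
Definition inG (c : Gchoice) (m : nat) (X : mat) : Prop :=
  match c with
  | Gorient => Opp m X \/ Omm m X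
  | Gtime   => Opp m X \/ Opm m X
  | Gspace  => Opp m X \/ Omp m X
  end.

Definition gact (m : nat) (s : vec) (A : mat) (x : vec) : vec :=
  vadd s (mv m A x).

Definition inI (tau t : R) : Prop := 0 <= t <= tau.

Definition AC (tau : R) (f : R -> R) : Prop :=
  forall eps, 0 < eps -> exists delta, 0 < delta /\
    forall (n : nat) (a b : nat -> R),
      0 <= a O ->
      (forall k, (k <= n)%nat -> a k <= b k) ->
      (forall k, (k < n)%nat -> b k <= a (S k)) ->
      b n <= tau ->
      sum_f_R0 (fun k => b k - a k) n < delta ->
      sum_f_R0 (fun k => Rabs (f (b k) - f (a k))) n < eps.

Definition ACv (m : nat) (tau : R) (x : R -> vec) : Prop :=
  forall i, (i <= m)%nat -> AC tau (fun t => x t i).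
Definition ACm (m : nat) (tau : R) (A : R -> mat) : Prop :=
  forall i j, (i <= m)%nat -> (j <= m)%nat -> AC tau (fun t => A t i j).

Definition null (N : R -> Prop) : Prop :=
  forall eps, 0 < eps -> exists c d : nat -> R,
    (forall k, c k <= d k) /\
    (forall t, N t -> exists k, c k <= t <= d k) /\
    (forall n, sum_f_R0 (fun k => d k - c k) n < eps).

Definition AE (tau : R) (P : R -> Prop) : Prop :=
  exists N, null N /\ forall t, inI tau t -> ~ N t -> P t.

Definition vderiv (m : nat) (x : R -> vec) (t : R) (xd : vec) : Prop :=
  forall i, (i <= m)%nat -> derivable_pt_lim (fun r => x r i) t (xd i).
Definition mderiv (m : nat) (A : R -> mat) (t : R) (Ad : mat) : Prop :=
  forall i j, (i <= m)%nat -> (j <= m)%nat ->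
    derivable_pt_lim (fun r => A r i j) t (Ad i j).

(* A pseudo-Riemannian hypersurface of R^{m+1}_1 given by:
   pt p       : p lies on the hypersurface,
   tan p v    : v lies in the tangent space at p,
   nrm p      : a chosen unit normal at p, used to induce the G-orientation
                of the hypersurface from that of R^{m+1}_1. *)
Record hypersurface := Hyp {
  pt  : vec -> Prop;
  tan : vec -> vec -> Prop;
  nrm : vec -> vec }.

Definition normal (m : nat) (M : hypersurface) (p w : vec) : Prop :=
  forall v, tan M p v -> dotJ m w v = 0.

Definition lsphere (m : nat) : hypersurface :=
  Hyp (fun p => dotJ m p p = 1) (fun p v => dotJ m v p = 0) (fun p => p).

Definition affTan (m : nat) (x0 : vec) : hypersurface :=
  Hyp (fun p => dotJ m (vsub p x0) x0 = 0) (fun _ v => dotJ m v x0 = 0)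
      (fun _ => x0).

(* G-orientation preservation of A|_{T_p M} : T_p M -> T_q Mh, where the
   G-orientations of M, Mh are induced from R^{m+1}_1 by their unit normals:
   the linear map equal to A on T_p M and sending nrm M p to nrm Mh q
   belongs to G. *)
Definition preservesGor (c : Gchoice) (m : nat) (M Mh : hypersurface)
    (A : mat) (p q : vec) : Prop :=
  exists B, inG c m B /\
    (forall v, tan M p v -> vecEq m (mv m B v) (mv m A v)) /\
    vecEq m (mv m B (nrm M p)) (nrm Mh q).

Definition rolling (c : Gchoice) (m : nat) (tau : R) (M Mh : hypersurface)
    (x s : R -> vec) (A : R -> mat) : Prop :=
  let xh := fun t => gact m (s t) (A t) (x t) in
  ACv m tau x /\ ACv m tau s /\ ACm m tau A /\
  (forall t, inI tau t -> pt M (x t)) /\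
  (forall t, inI tau t -> inG c m (A t)) /\
  AE tau (fun t =>
    pt Mh (xh t) /\
    (forall v, tan M (x t) v -> tan Mh (xh t) (mv m (A t) v)) /\
    (forall w, tan Mh (xh t) w ->
       exists v, tan M (x t) v /\ vecEq m (mv m (A t) v) w) /\
    preservesGor c m M Mh (A t) (x t) (xh t) /\
    (exists xd xhd, vderiv m x t xd /\ vderiv m xh t xhd /\
       vecEq m xhd (mv m (A t) xd)) /\
    (* (v) no twisting, tangential part: A (D/dt Z) = D/dt (A Z) *)
    (forall Z : R -> vec, ACv m tau Z ->
       (forall r, inI tau r -> tan M (x r) (Z r)) ->
       forall Zd Wd, vderiv m Z t Zd ->
       vderiv m (fun r => mv m (A r) (Z r)) t Wd ->
       forall p q,
         tan M (x t) p -> normal m M (x t) (vsub Zd p) ->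
         tan Mh (xh t) q -> normal m Mh (xh t) (vsub Wd q) ->
         vecEq m (mv m (A t) p) q) /\
    (* (vi) no twisting, normal part: A (D^perp/dt Psi) = D^perp/dt (A Psi) *)
    (forall Psi : R -> vec, ACv m tau Psi ->
       (forall r, inI tau r -> normal m M (x r) (Psi r)) ->
       forall Pd Wd, vderiv m Psi t Pd ->
       vderiv m (fun r => mv m (A r) (Psi r)) t Wd ->
       forall p q,
         normal m M (x t) p -> tan M (x t) (vsub Pd p) ->
         normal m Mh (xh t) q -> tan Mh (xh t) (vsub Wd q) ->
         vecEq m (mv m (A t) p) q)).

(* Main.v *)
Require Import Defs.
From Stdlib Require Import Reals Lra Lia Classical FunctionalExtensionality.
From mathcomp Require ssreflect ssrbool ssrfun eqtype ssrnat seq fintype bigop ssralg matrix.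
From mathcomp.reals_stdlib Require Rstruct.
Open Scope R_scope.

Lemma sum_shift (f : nat -> R) n :
  sum_f_R0 f (S n) = f O + sum_f_R0 (fun k => f (S k)) n.
Proof. induction n; simpl in *; [ring|]. rewrite IHn. ring. Qed.

Lemma sum_nonneg_le (g : nat -> R) K K' :
  (forall j, 0 <= g j) -> (K <= K')%nat -> sum_f_R0 g K <= sum_f_R0 g K'.
Proof.
  intros Hg HK. induction HK; [lra|]. simpl. specialize (Hg (S m)). lra.
Qed.

Lemma sum_term_le (g : nat -> R) k K :
  (forall j, 0 <= g j) -> (k <= K)%nat -> g k <= sum_f_R0 g K.
Proof.
  intros Hg HK. apply Rle_trans with (sum_f_R0 g k).
  - destruct k; simpl; [lra|]. assert (0 <= sum_f_R0 g k).
    { clear HK. induction k; simpl; [apply Hg|]. specialize (Hg (S k)); lra. }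
    lra.
  - apply sum_nonneg_le; auto.
Qed.

Lemma sum_geom_half K : sum_f_R0 (fun k => (/2)^k) K = 2 - (/2)^K.
Proof. induction K; simpl; [lra|]. rewrite IHK. field. Qed.

Lemma pow_half_pos k : 0 < (/2)^k.
Proof. apply pow_lt. lra. Qed.

Lemma AC_single tau f : AC tau f -> forall eps, 0 < eps -> exists delta, 0 < delta /\
  forall a b, 0 <= a -> a <= b -> b <= tau -> b - a < delta -> Rabs (f b - f a) < eps.
Proof.
  intros H eps Heps. destruct (H eps Heps) as [d [Hd Hf]]. exists d. split; auto.
  intros a b Ha Hab Hb Hl.
  specialize (Hf O (fun _ => a) (fun _ => b) Ha). simpl in Hf. apply Hf; auto.
  intros k Hk. lia.
Qed.

Lemma chain_lo (n : nat) (a b : nat -> R) :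
  (forall k, (k <= n)%nat -> a k <= b k) ->
  (forall k, (k < n)%nat -> b k <= a (S k)) ->
  forall k, (k <= n)%nat -> a O <= a k.
Proof.
  intros H1 H2 k. induction k; intros Hk; [lra|].
  assert (a k <= b k) by (apply H1; lia). assert (b k <= a (S k)) by (apply H2; lia).
  specialize (IHk ltac:(lia)). lra.
Qed.

Lemma chain_hi (n : nat) (a b : nat -> R) :
  (forall k, (k <= n)%nat -> a k <= b k) ->
  (forall k, (k < n)%nat -> b k <= a (S k)) ->
  forall k, (k <= n)%nat -> b k <= b n.
Proof.
  intros H1 H2.
  assert (forall j k, (k + j = n)%nat -> b k <= b n).
  { induction j; intros k Hk. { replace k with n by lia. lra. }
    assert (b k <= a (S k)) by (apply H2; lia).
    assert (a (S k) <= b (S k)) by (apply H1; lia).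
    specialize (IHj (S k) ltac:(lia)). lra. }
  intros k Hk. apply (H (n - k)%nat). lia.
Qed.

Lemma AC_ext tau f g : (forall t, inI tau t -> f t = g t) -> AC tau f -> AC tau g.
Proof.
  intros He H eps Heps. destruct (H eps Heps) as [d [Hd Hf]]. exists d. split; auto.
  intros n a b H0 H1 H2 H3 H4.
  assert (E : sum_f_R0 (fun k => Rabs (g (b k) - g (a k))) n =
              sum_f_R0 (fun k => Rabs (f (b k) - f (a k))) n).
  { apply sum_eq. intros i Hi.
    pose proof (chain_lo n a b H1 H2 i Hi). pose proof (chain_hi n a b H1 H2 i Hi).
    pose proof (H1 i Hi).
    rewrite (He (a i)), (He (b i)); auto; split; lra. }
  rewrite E. apply Hf; auto.
Qed.

Lemma AC_const tau c : AC tau (fun _ => c).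
Proof.
  intros eps Heps. exists 1. split; [lra|]. intros. 
  rewrite (sum_eq _ (fun _ => 0)).
  - assert (sum_f_R0 (fun _ => 0) n = 0) by (clear; induction n; simpl; lra). lra.
  - intros. replace (c - c) with 0 by ring. apply Rabs_R0.
Qed.

Lemma sum_abs_le (F : nat -> R) n : Rabs (sum_f_R0 F n) <= sum_f_R0 (fun k => Rabs (F k)) n.
Proof. apply sum_f_R0_triangle. Qed.

Lemma sum_plus' (F G : nat -> R) n : sum_f_R0 (fun k => F k + G k) n = sum_f_R0 F n + sum_f_R0 G n.
Proof. induction n; simpl; [ring|]. rewrite IHn. ring. Qed.

Lemma sum_scal' (F : nat -> R) c n : sum_f_R0 (fun k => c * F k) n = c * sum_f_R0 F n.
Proof. induction n; simpl; [ring|]. rewrite IHn. ring. Qed.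

Lemma sum_le' (F G : nat -> R) n : (forall k, (k <= n)%nat -> F k <= G k) ->
  sum_f_R0 F n <= sum_f_R0 G n.
Proof. apply sum_Rle. Qed.

Lemma AC_plus tau f g : AC tau f -> AC tau g -> AC tau (fun t => f t + g t).
Proof.
  intros Hf Hg eps Heps.
  destruct (Hf (eps/2) ltac:(lra)) as [d1 [Hd1 H1]].
  destruct (Hg (eps/2) ltac:(lra)) as [d2 [Hd2 H2]].
  exists (Rmin d1 d2). split; [apply Rmin_pos; auto|].
  intros n a b A0 A1 A2 A3 A4.
  assert (L1 : sum_f_R0 (fun k => b k - a k) n < d1) by (pose proof (Rmin_l d1 d2); lra).
  assert (L2 : sum_f_R0 (fun k => b k - a k) n < d2) by (pose proof (Rmin_r d1 d2); lra).
  specialize (H1 n a b A0 A1 A2 A3 L1). specialize (H2 n a b A0 A1 A2 A3 L2).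
  eapply Rle_lt_trans.
  - apply sum_le' with (G := fun k => Rabs (f (b k) - f (a k)) + Rabs (g (b k) - g (a k))).
    intros k _. replace (f (b k) + g (b k) - (f (a k) + g (a k))) with
      ((f (b k) - f (a k)) + (g (b k) - g (a k))) by ring. apply Rabs_triang.
  - rewrite sum_plus'. lra.
Qed.

Lemma AC_scal tau c f : AC tau f -> AC tau (fun t => c * f t).
Proof.
  intros Hf eps Heps.
  destruct (Hf (eps / (Rabs c + 1))) as [d [Hd H1]].
  { apply Rdiv_lt_0_compat; auto. pose proof (Rabs_pos c); lra. }
  exists d. split; auto. intros n a b A0 A1 A2 A3 A4.
  specialize (H1 n a b A0 A1 A2 A3 A4).
  rewrite (sum_eq _ (fun k => Rabs c * Rabs (f (b k) - f (a k)))).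
  2:{ intros. rewrite <- Rabs_mult. f_equal. ring. }
  rewrite sum_scal'. pose proof (Rabs_pos c).
  assert (0 <= sum_f_R0 (fun k => Rabs (f (b k) - f (a k))) n).
  { apply cond_pos_sum. intros; apply Rabs_pos. }
  apply Rle_lt_trans with ((Rabs c + 1) * sum_f_R0 (fun k => Rabs (f (b k) - f (a k))) n).
  { nra. }
  apply Rmult_lt_compat_l with (r := Rabs c + 1) in H1; [|lra].
  replace ((Rabs c + 1) * (eps / (Rabs c + 1))) with eps in H1 by (field; lra). lra.
Qed.

Definition clampI (tau x : R) : R := Rmin (Rmax x 0) tau.

Lemma clampI_in tau x : 0 <= tau -> inI tau (clampI tau x).
Proof. intros. unfold clampI, inI, Rmin, Rmax. repeat destruct Rle_dec; lra. Qed.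

Lemma clampI_id tau x : inI tau x -> clampI tau x = x.
Proof. intros [H1 H2]. unfold clampI, Rmin, Rmax. repeat destruct Rle_dec; lra. Qed.

Lemma clampI_lip tau x y : 0 <= tau -> Rabs (clampI tau y - clampI tau x) <= Rabs (y - x).
Proof.
  intros. unfold clampI, Rmin, Rmax. unfold Rabs.
  repeat destruct Rle_dec; repeat destruct Rcase_abs; lra.
Qed.

Lemma AC_within tau f : AC tau f -> forall eps, 0 < eps -> exists delta, 0 < delta /\
  forall p q, inI tau p -> inI tau q -> Rabs (p - q) < delta -> Rabs (f p - f q) < eps.
Proof.
  intros H eps Heps. destruct (AC_single tau f H eps Heps) as [d [Hd Hf]].
  exists d. split; auto. intros p q [Hp1 Hp2] [Hq1 Hq2] Hpq.
  destruct (Rle_dec q p).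
  - apply Hf; auto. rewrite Rabs_right in Hpq; lra.
  - rewrite Rabs_minus_sym. apply Hf; try lra. rewrite Rabs_left in Hpq; lra.
Qed.

Lemma AC_cont_ext tau f : 0 <= tau -> AC tau f -> continuity (fun x => f (clampI tau x)).
Proof.
  intros Ht H x. unfold continuity_pt, continue_in, limit1_in, limit_in. simpl.
  unfold R_dist. intros eps Heps.
  destruct (AC_within tau f H eps Heps) as [d [Hd Hf]].
  exists d. split; auto. intros y [_ Hy].
  apply Hf; try apply clampI_in; auto.
  eapply Rle_lt_trans; [apply clampI_lip; auto|]. auto.
Qed.

Lemma AC_bounded tau f : AC tau f -> exists M, forall t, inI tau t -> Rabs (f t) <= M.
Proof.
  intros H. destruct (Rle_dec 0 tau) as [Ht|Ht].
  2:{ exists 0. intros t [H1 H2]. lra. }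
  pose proof (AC_cont_ext tau f Ht H) as Hc.
  destruct (continuity_ab_maj (fun x => Rabs (f (clampI tau x))) 0 tau Ht) as [Mx [HM _]].
  { intros c _. apply (continuity_pt_comp (fun x => f (clampI tau x)) Rabs).
    apply Hc. apply Rcontinuity_abs. }
  exists (Rabs (f (clampI tau Mx))). intros t Hti.
  specialize (HM t Hti). simpl in HM. rewrite clampI_id in HM; auto.
Qed.

Lemma AC_mult tau f g : AC tau f -> AC tau g -> AC tau (fun t => f t * g t).
Proof.
  intros Hf Hg.
  destruct (AC_bounded tau f Hf) as [Mf HMf]. destruct (AC_bounded tau g Hg) as [Mg HMg].
  intros eps Heps.
  set (Mf' := Rabs Mf + 1). set (Mg' := Rabs Mg + 1).
  assert (PMf : 0 < Mf') by (unfold Mf'; pose proof (Rabs_pos Mf); lra).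
  assert (PMg : 0 < Mg') by (unfold Mg'; pose proof (Rabs_pos Mg); lra).
  destruct (Hf (eps / (2 * Mg'))) as [d1 [Hd1 H1]].
  { apply Rdiv_lt_0_compat; lra. }
  destruct (Hg (eps / (2 * Mf'))) as [d2 [Hd2 H2]].
  { apply Rdiv_lt_0_compat; lra. }
  exists (Rmin d1 d2). split; [apply Rmin_pos; auto|].
  intros n a b A0 A1 A2 A3 A4.
  assert (L1 : sum_f_R0 (fun k => b k - a k) n < d1) by (pose proof (Rmin_l d1 d2); lra).
  assert (L2 : sum_f_R0 (fun k => b k - a k) n < d2) by (pose proof (Rmin_r d1 d2); lra).
  specialize (H1 n a b A0 A1 A2 A3 L1). specialize (H2 n a b A0 A1 A2 A3 L2).
  eapply Rle_lt_trans.
  - apply sum_le' with (G := fun k => Mg' * Rabs (f (b k) - f (a k)) + Mf' * Rabs (g (b k) - g (a k))).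
    intros k Hk.
    pose proof (chain_lo n a b A1 A2 k Hk). pose proof (chain_hi n a b A1 A2 k Hk).
    pose proof (A1 k Hk).
    assert (Ia : inI tau (a k)) by (split; lra). assert (Ib : inI tau (b k)) by (split; lra).
    replace (f (b k) * g (b k) - f (a k) * g (a k)) with
      ((f (b k) - f (a k)) * g (a k) + f (b k) * (g (b k) - g (a k))) by ring.
    eapply Rle_trans; [apply Rabs_triang|]. rewrite !Rabs_mult.
    pose proof (HMg _ Ia). pose proof (HMf _ Ib).
    pose proof (Rabs_pos (f (b k) - f (a k))). pose proof (Rabs_pos (g (b k) - g (a k))).
    assert (Rabs (g (a k)) <= Mg') by (unfold Mg'; pose proof (Rle_abs Mg); lra).
    assert (Rabs (f (b k)) <= Mf') by (unfold Mf'; pose proof (Rle_abs Mf); lra).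
    apply Rplus_le_compat; [rewrite (Rmult_comm Mg'); apply Rmult_le_compat_l; lra|apply Rmult_le_compat_r; lra].
  - rewrite sum_plus', !sum_scal'.
    apply Rmult_lt_compat_l with (r := Mg') in H1; [|lra].
    apply Rmult_lt_compat_l with (r := Mf') in H2; [|lra].
    replace (Mg' * (eps / (2 * Mg'))) with (eps/2) in H1 by (field; lra).
    replace (Mf' * (eps / (2 * Mf'))) with (eps/2) in H2 by (field; lra). lra.
Qed.

Lemma AC_sum tau (F : nat -> R -> R) n :
  (forall k, (k <= n)%nat -> AC tau (F k)) -> AC tau (fun t => sum_f_R0 (fun k => F k t) n).
Proof.
  induction n; intros H; simpl.
  - apply H; lia.
  - apply AC_plus; [apply IHn; intros; apply H; lia | apply H; lia].
Qed.

Lemma sign_persist tau f : AC tau f -> (forall t, inI tau t -> f t <> 0) -> 0 < f 0 ->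
  forall t, inI tau t -> 0 < f t.
Proof.
  intros H Hnz H0 t Ht.
  assert (Htau : 0 <= tau) by (destruct Ht; lra).
  destruct (Rlt_dec 0 (f t)) as [|Hn]; auto. exfalso.
  assert (Hneg : f t < 0) by (pose proof (Hnz t Ht); lra).
  set (g := fun x => - f (clampI tau x)).
  assert (Hg : continuity g).
  { apply continuity_opp. apply AC_cont_ext; auto. }
  destruct (Req_dec t 0) as [E|E]. { subst. lra. }
  destruct (IVT g 0 t Hg) as [z [Hz Hgz]].
  - destruct Ht; lra.
  - unfold g. rewrite clampI_id; [lra|split; lra].
  - unfold g. rewrite clampI_id; auto. lra.
  - unfold g in Hgz. rewrite clampI_id in Hgz.
    + apply (Hnz z); [destruct Ht; split; lra|lra].
    + destruct Ht; split; lra.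
Qed.

Lemma real_ind (a b : R) (Q : R -> Prop) : a <= b -> Q a ->
  (forall x, a <= x <= b -> exists g, 0 < g /\
     forall y z, a <= y -> y <= x -> x <= z -> z <= b -> z - y < g -> Q y -> Q z) ->
  Q b.
Proof.
  intros Hab Qa Hstep.
  set (E := fun z => a <= z <= b /\ Q z).
  assert (Hb : bound E) by (exists b; intros z [[_ Hz] _]; auto).
  assert (He : exists z, E z) by (exists a; split; [lra|auto]).
  destruct (completeness E Hb He) as [s [Hub Hlub]].
  assert (Has : a <= s) by (apply Hub; split; [lra|auto]).
  assert (Hsb : s <= b) by (apply Hlub; intros z [[_ Hz] _]; auto).
  destruct (Hstep s ltac:(lra)) as [g [Hg Hs]].
  assert (Hz : exists z, E z /\ s - g/2 < z).
  { apply NNPP. intro Hn.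
    assert (is_upper_bound E (s - g/2)).
    { intros z Ez. destruct (Rle_dec z (s - g/2)); auto. exfalso. apply Hn. exists z. split; auto. lra. }
    specialize (Hlub _ H). lra. }
  destruct Hz as [z [[[Hz1 Hz2] Qz] Hzs]].
  assert (Hzs' : z <= s) by (apply Hub; split; [lra|auto]).
  set (z' := Rmin b (s + g/2)).
  assert (Hz'1 : s <= z') by (unfold z', Rmin; destruct Rle_dec; lra).
  assert (Hz'2 : z' <= b) by (unfold z', Rmin; destruct Rle_dec; lra).
  assert (Qz' : Q z').
  { apply (Hs z z'); [lra|lra|lra|lra| unfold z', Rmin; destruct Rle_dec; lra | auto]. }
  assert (z' <= s) by (apply Hub; split; [lra|auto]).
  assert (z' = b) by (unfold z' in *; unfold Rmin in *; destruct Rle_dec; lra).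
  rewrite <- H0. auto.
Qed.

Lemma deriv0_bound f x : derivable_pt_lim f x 0 -> forall eps, 0 < eps -> exists g, 0 < g /\
  forall y, Rabs (y - x) < g -> Rabs (f y - f x) <= eps * Rabs (y - x).
Proof.
  intros H eps Heps. destruct (H eps Heps) as [d Hd]. exists d. split; [apply cond_pos|].
  intros y Hy. destruct (Req_dec y x) as [E|E].
  { subst. replace (f x - f x) with 0 by ring. rewrite Rabs_R0. pose proof (Rabs_pos (x - x)). nra. }
  assert (Hh : y - x <> 0) by lra.
  specialize (Hd (y - x) Hh Hy). replace (x + (y - x)) with y in Hd by ring.
  rewrite Rminus_0_r in Hd.
  replace (f y - f x) with ((f y - f x) / (y - x) * (y - x)) by (field; auto).
  rewrite Rabs_mult. apply Rmult_le_compat_r; [apply Rabs_pos|lra].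
Qed.

Definition ellf (C D x : R) : R := Rmin (Rmax x C) D - C.

Lemma ellf_mono C D x y : x <= y -> ellf C D x <= ellf C D y.
Proof. intros. unfold ellf, Rmin, Rmax. repeat destruct Rle_dec; lra. Qed.

Lemma ellf_lin C D y z : C <= y -> y <= z -> z <= D -> ellf C D z - ellf C D y = z - y.
Proof. intros. unfold ellf, Rmin, Rmax. repeat destruct Rle_dec; lra. Qed.

Lemma ellf_range C D x y : C <= D -> x <= y -> ellf C D y - ellf C D x <= D - C.
Proof. intros. unfold ellf, Rmin, Rmax. repeat destruct Rle_dec; lra. Qed.

Definition upd (a : nat -> R) (n : nat) (v : R) : nat -> R :=
  fun j => if Nat.eqb j n then v else a j.

Lemma sum_upd (F : R -> R -> R) (a b : nat -> R) n y z :
  sum_f_R0 (fun k => F (upd b (S n) z k) (upd a (S n) y k)) (S n) =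
  sum_f_R0 (fun k => F (b k) (a k)) n + F z y.
Proof.
  simpl. unfold upd at 3 4. rewrite Nat.eqb_refl. f_equal.
  apply sum_eq. intros i Hi. unfold upd. replace (Nat.eqb i (S n)) with false; auto.
  symmetry. apply Nat.eqb_neq. lia.
Qed.

Lemma AC_deriv0 tau f N : AC tau f -> null N ->
  (forall t, inI tau t -> ~ N t -> derivable_pt_lim f t 0) ->
  forall t, inI tau t -> f t = f 0.
Proof.
  intros Hac Hnull Hder t1 Ht1.
  assert (Key : forall eps, 0 < eps -> Rabs (f t1 - f 0) <= eps * t1 + eps).
  { intros eps Heps.
    destruct (Hac eps Heps) as [delta [Hdelta Hac']].
    destruct (Hnull (delta/2) ltac:(lra)) as [c [d [Hcd [Hcov Hsum]]]].
    set (e := fun k => delta / 8 * (/2)^k).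
    assert (He : forall k, 0 < e k) by (intro k; unfold e; pose proof (pow_half_pos k); nra).
    set (C := fun k => c k - e k). set (D := fun k => d k + e k).
    set (Phi := fun K x => sum_f_R0 (fun k => ellf (C k) (D k) x) K).
    assert (HCD : forall k, C k <= D k) by (intro k; unfold C, D; specialize (Hcd k); specialize (He k); lra).
    assert (Hinc : forall K x y, x <= y -> 0 <= ellf (C K) (D K) y - ellf (C K) (D K) x).
    { intros. pose proof (ellf_mono (C K) (D K) x y H). lra. }
    assert (PhiD : forall K x y, Phi K y - Phi K x = sum_f_R0 (fun k => ellf (C k) (D k) y - ellf (C k) (D k) x) K).
    { intros. unfold Phi. rewrite minus_sum. reflexivity. }
    set (Q := fun z => exists n a b K, 0 <= a O /\ (forall k, (k <= n)%nat -> a k <= b k) /\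
        (forall k, (k < n)%nat -> b k <= a (S k)) /\ b n <= z /\
        sum_f_R0 (fun k => b k - a k) n <= Phi K z - Phi K 0 /\
        Rabs (f z - f 0) <= eps * z + sum_f_R0 (fun k => Rabs (f (b k) - f (a k))) n).
    assert (Q0 : Q 0).
    { exists O, (fun _ => 0), (fun _ => 0), O. simpl. repeat split; intros; try lra; try lia. }
    assert (Qt : Q t1).
    { apply (real_ind 0 t1 Q); auto. { destruct Ht1; lra. }
      intros x Hx. destruct (classic (N x)) as [Nx|Nx].
      - destruct (Hcov x Nx) as [k0 Hk0]. exists (e k0). split; auto.
        intros y z Hy1 Hyx Hxz Hz1 Hyz [n [a [b [K [Q1 [Q2 [Q3 [Q4 [Q5 Q6]]]]]]]]].
        exists (S n), (upd a (S n) y), (upd b (S n) z), (Nat.max K k0).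
        assert (HyC : C k0 <= y) by (unfold C; lra).
        assert (HzD : z <= D k0) by (unfold D; lra).
        repeat split.
        + unfold upd. simpl. auto.
        + intros k Hk. unfold upd. destruct (Nat.eqb k (S n)) eqn:Ek; [lra|].
          apply Nat.eqb_neq in Ek. apply Q2. lia.
        + intros k Hk. unfold upd. rewrite (proj2 (Nat.eqb_neq k (S n))) by lia.
          destruct (Nat.eqb (S k) (S n)) eqn:Ek.
          * apply Nat.eqb_eq in Ek. injection Ek as ->. lra.
          * apply Nat.eqb_neq in Ek. apply Q3. lia.
        + unfold upd. rewrite Nat.eqb_refl. lra.
        + rewrite (sum_upd (fun p q => p - q)).
          set (K' := Nat.max K k0).
          assert (A1 : Phi K y - Phi K 0 <= Phi K' y - Phi K' 0).
          { rewrite !PhiD. apply sum_nonneg_le; [intro; apply Hinc; lra| apply Nat.le_max_l]. }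
          assert (A2 : z - y <= Phi K' z - Phi K' y).
          { rewrite PhiD. rewrite <- (ellf_lin (C k0) (D k0) y z) by lra.
            apply (sum_term_le (fun k => ellf (C k) (D k) z - ellf (C k) (D k) y)).
            - intro; apply Hinc; lra.
            - apply Nat.le_max_r. }
          assert (A3 : Phi K y <= Phi K z).
          { pose proof (PhiD K y z). assert (0 <= sum_f_R0 (fun k => ellf (C k) (D k) z - ellf (C k) (D k) y) K).
            { apply cond_pos_sum. intro; apply Hinc; lra. } lra. }
          lra.
        + rewrite (sum_upd (fun p q => Rabs (f p - f q))).
          replace (f z - f 0) with ((f z - f y) + (f y - f 0)) by ring.
          eapply Rle_trans; [apply Rabs_triang|].
          assert (eps * y <= eps * z) by nra. lra.
      - assert (Hxi : inI tau x) by (destruct Ht1; split; lra).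
        destruct (deriv0_bound f x (Hder x Hxi Nx) eps Heps) as [g [Hg Hgb]].
        exists g. split; auto.
        intros y z Hy1 Hyx Hxz Hz1 Hyz [n [a [b [K [Q1 [Q2 [Q3 [Q4 [Q5 Q6]]]]]]]]].
        exists n, a, b, K. repeat split; auto.
        + lra.
        + assert (Phi K y <= Phi K z).
          { pose proof (PhiD K y z). assert (0 <= sum_f_R0 (fun k => ellf (C k) (D k) z - ellf (C k) (D k) y) K).
            { apply cond_pos_sum. intro; apply Hinc; lra. } lra. }
          lra.
        + assert (B1 : Rabs (f z - f x) <= eps * (z - x)).
          { pose proof (Hgb z ltac:(rewrite Rabs_right; lra)) as HH. rewrite (Rabs_right (z - x)) in HH by lra. lra. }
          assert (B2 : Rabs (f y - f x) <= eps * (x - y)).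
          { pose proof (Hgb y ltac:(rewrite Rabs_left1; lra)) as HH. rewrite (Rabs_left1 (y - x)) in HH by lra. lra. }
          replace (f z - f 0) with ((f z - f x) - (f y - f x) + (f y - f 0)) by ring.
          eapply Rle_trans; [apply Rabs_triang|].
          eapply Rle_trans; [apply Rplus_le_compat_r; apply Rabs_triang|].
          rewrite Rabs_Ropp. lra. }
    destruct Qt as [n [a [b [K [Q1 [Q2 [Q3 [Q4 [Q5 Q6]]]]]]]]].
    assert (Hlen : sum_f_R0 (fun k => b k - a k) n < delta).
    { eapply Rle_lt_trans; [apply Q5|]. rewrite PhiD.
      eapply Rle_lt_trans.
      - apply sum_le' with (G := fun k => D k - C k). intros k _. apply ellf_range; auto. destruct Ht1; lra.
      - rewrite (sum_eq _ (fun k => (d k - c k) + delta/4 * (/2)^k)).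
        2:{ intros. unfold D, C, e. field. }
        rewrite sum_plus', sum_scal', sum_geom_half. specialize (Hsum K).
        pose proof (pow_half_pos K). nra. }
    assert (Hb : b n <= tau) by (destruct Ht1; lra).
    specialize (Hac' n a b Q1 Q2 Q3 Hb Hlen). lra. }
  destruct (Req_dec (f t1 - f 0) 0) as [E|E]; [lra|exfalso].
  assert (Hp : 0 < Rabs (f t1 - f 0)) by (apply Rabs_pos_lt; auto).
  destruct Ht1 as [Ht1a Ht1b].
  specialize (Key (Rabs (f t1 - f 0) / (2 * (t1 + 1)))).
  assert (0 < Rabs (f t1 - f 0) / (2 * (t1 + 1))) by (apply Rdiv_lt_0_compat; lra).
  specialize (Key H).
  replace (Rabs (f t1 - f 0) / (2 * (t1 + 1)) * t1 + Rabs (f t1 - f 0) / (2 * (t1 + 1)))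
    with (Rabs (f t1 - f 0) / 2) in Key by (field; lra). lra.
Qed.

Module Bridge.
Import ssreflect ssrbool ssrfun eqtype ssrnat seq fintype bigop ssralg matrix Rstruct.
Import GRing.Theory.
Local Open Scope ring_scope.

Definition toM (n : nat) (A : mat) : 'M[R]_n := \matrix_(i < n, j < n) A i j.

Lemma sumR_bridge (f : nat -> R) n : sum_f_R0 f n = \sum_(i < n.+1) f i.
Proof.
  elim: n => [|n IH]; first by rewrite big_ord_recr big_ord0 /= add0r.
  by rewrite big_ord_recr /= -IH.
Qed.

Lemma powm1 (j : nat) : Rpow_def.pow (-1)%R j = (-1) ^+ j.
Proof.
  elim: j => [|j IH] //=. rewrite exprS IH. reflexivity.
Qed.

Lemma det_bridge n (A : mat) : det n A = \det (toM n A).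
Proof.
  elim: n A => [|n IH] A.
  - by rewrite /= det_mx00.
  - rewrite (expand_det_row _ ord0) /= sumR_bridge.
    apply: eq_bigr => j _.
    rewrite /cofactor /toM mxE IH powm1 add0n.
    have -> : toM n (minor0 j A) = row' ord0 (col' j (\matrix_(i < n.+1, j0 < n.+1) A i j0)).
      apply/matrixP => k l. rewrite /toM !mxE /minor0 /= /bump.
      case: (ltnP l j) => H.
      + have -> : Nat.ltb l j = true by apply/PeanoNat.Nat.ltb_lt; apply/ssrnat.ltP.
        by rewrite leq0n.
      + have -> : Nat.ltb l j = false.
          apply/PeanoNat.Nat.ltb_ge; apply/ssrnat.leP; exact H.
        by rewrite leq0n.
    rewrite mulrCA mulrA. reflexivity.
Qed.

Lemma toM_mm n (A B : mat) : toM n.+1 (mm n A B) = toM n.+1 A *m toM n.+1 B.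
Proof.
  apply/matrixP => i j. rewrite /toM !mxE /mm sumR_bridge.
  apply: eq_bigr => k _. by rewrite !mxE.
Qed.

Lemma toM_I n : toM n Imat = 1%:M.
Proof.
  apply/matrixP => i j. rewrite /toM !mxE /Imat.
  case: (PeanoNat.Nat.eqb_spec i j) => H.
  - have -> : i = j by apply: val_inj.
    by rewrite eqxx.
  - have -> : (i == j) = false by apply/negP => /eqP E; apply: H; rewrite E.
    by [].
Qed.

Lemma toM_ext n (A B : mat) : (forall i j, lt i n -> lt j n -> A i j = B i j) ->
  toM n A = toM n B.
Proof. move=> H. apply/matrixP => i j. rewrite /toM !mxE. apply: H; apply/ssrnat.ltP; apply: ltn_ord. Qed.

Lemma detmm n (A B : mat) : \det (toM n.+1 (mm n A B)) = Rmult (\det (toM n.+1 A)) (\det (toM n.+1 B)).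
Proof. rewrite toM_mm. exact: det_mulmx. Qed.

Lemma detI n : \det (toM n Imat) = R1.
Proof. rewrite toM_I. exact: det1. Qed.
End Bridge.

Lemma det_ext n (A B : mat) : (forall i j, (i < n)%nat -> (j < n)%nat -> A i j = B i j) ->
  det n A = det n B.
Proof. intros H. rewrite !Bridge.det_bridge. f_equal. apply Bridge.toM_ext; auto. Qed.

Lemma det_mm n (A B : mat) : det (S n) (mm n A B) = det (S n) A * det (S n) B.
Proof. rewrite !Bridge.det_bridge. apply Bridge.detmm. Qed.

Lemma det_I n : det n Imat = 1.
Proof. rewrite Bridge.det_bridge. apply Bridge.detI. Qed.

Lemma sum_mul_r (F : nat -> R) c n : sum_f_R0 F n * c = sum_f_R0 (fun k => F k * c) n.
Proof. induction n; simpl; [ring|]. rewrite <- IHn. ring. Qed.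

Lemma sum_mul_l (F : nat -> R) c n : c * sum_f_R0 F n = sum_f_R0 (fun k => c * F k) n.
Proof. induction n; simpl; [ring|]. rewrite <- IHn. ring. Qed.

Lemma sum_opp (F : nat -> R) n : - sum_f_R0 F n = sum_f_R0 (fun k => - F k) n.
Proof. induction n; simpl; [ring|]. rewrite <- IHn. ring. Qed.

Lemma sum_minus' (F G : nat -> R) n : sum_f_R0 (fun k => F k - G k) n = sum_f_R0 F n - sum_f_R0 G n.
Proof. induction n; simpl; [ring|]. rewrite IHn. ring. Qed.

Lemma sum_zero n : sum_f_R0 (fun _ => 0) n = 0.
Proof. induction n; simpl; [ring|]. rewrite IHn. ring. Qed.

Lemma sum_swap (F : nat -> nat -> R) n p :
  sum_f_R0 (fun i => sum_f_R0 (fun j => F i j) p) n =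
  sum_f_R0 (fun j => sum_f_R0 (fun i => F i j) n) p.
Proof.
  induction n; simpl; [reflexivity|]. rewrite IHn. rewrite <- sum_plus'. reflexivity.
Qed.

Lemma sum_prod (F G : nat -> R) n p :
  sum_f_R0 F n * sum_f_R0 G p = sum_f_R0 (fun i => sum_f_R0 (fun j => F i * G j) p) n.
Proof.
  rewrite sum_mul_r. apply sum_eq. intros. rewrite Rmult_comm, sum_mul_r.
  apply sum_eq. intros. ring.
Qed.

Lemma sum_delta (f : nat -> R) i n :
  (i <= n)%nat -> sum_f_R0 (fun k => if Nat.eqb i k then f k else 0) n = f i.
Proof.
  intros H. induction n.
  - replace i with O by lia. simpl. reflexivity.
  - simpl. destruct (Nat.eq_dec i (S n)) as [E|E].
    + subst. rewrite Nat.eqb_refl.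
      rewrite (sum_eq _ (fun _ => 0)); [rewrite sum_zero; ring|].
      intros k Hk. replace (Nat.eqb (S n) k) with false; auto. symmetry; apply Nat.eqb_neq; lia.
    + rewrite IHn by lia. replace (Nat.eqb i (S n)) with false; [ring|]. symmetry; apply Nat.eqb_neq; lia.
Qed.

Lemma sum_delta' (f : nat -> R) i n :
  (i <= n)%nat -> sum_f_R0 (fun k => if Nat.eqb k i then f k else 0) n = f i.
Proof.
  intros H. rewrite <- (sum_delta f i n H). apply sum_eq. intros k _. rewrite Nat.eqb_sym. reflexivity.
Qed.

Lemma Jsign_sq i : Jsign i * Jsign i = 1.
Proof. destruct i; simpl; ring. Qed.

Lemma Jsign_nz i : Jsign i <> 0.
Proof. destruct i; simpl; lra. Qed.

Lemma matEq_refl m A : matEq m A A.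
Proof. intros i j _ _. reflexivity. Qed.
Lemma matEq_sym m A B : matEq m A B -> matEq m B A.
Proof. intros H i j Hi Hj. symmetry. auto. Qed.
Lemma matEq_trans m A B C : matEq m A B -> matEq m B C -> matEq m A C.
Proof. intros H1 H2 i j Hi Hj. rewrite H1; auto. Qed.
Lemma vecEq_refl m a : vecEq m a a.
Proof. intros i _. reflexivity. Qed.
Lemma vecEq_sym m a b : vecEq m a b -> vecEq m b a.
Proof. intros H i Hi. symmetry. auto. Qed.
Lemma vecEq_trans m a b c : vecEq m a b -> vecEq m b c -> vecEq m a c.
Proof. intros H1 H2 i Hi. rewrite H1; auto. Qed.

Lemma mm_assoc m A B C i l :
  mm m (mm m A B) C i l = mm m A (mm m B C) i l.
Proof.
  unfold mm.
  rewrite (sum_eq _ (fun j => sum_f_R0 (fun k => A i k * B k j * C j l) m))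
    by (intros; apply sum_mul_r).
  rewrite sum_swap. apply sum_eq. intros k _. rewrite sum_mul_l. apply sum_eq. intros; ring.
Qed.

Lemma mm_compat m A A' B B' : matEq m A A' -> matEq m B B' -> matEq m (mm m A B) (mm m A' B').
Proof.
  intros H1 H2 i j Hi Hj. unfold mm. apply sum_eq. intros k Hk. rewrite H1, H2; auto.
Qed.

Lemma mm_I_l m A : matEq m (mm m Imat A) A.
Proof.
  intros i j Hi Hj. unfold mm, Imat.
  rewrite (sum_eq _ (fun k => if Nat.eqb i k then A k j else 0)).
  - apply (sum_delta (fun k => A k j)); auto.
  - intros k _. destruct (Nat.eqb i k); ring.
Qed.

Lemma mm_I_r m A : matEq m (mm m A Imat) A.
Proof.
  intros i j Hi Hj. unfold mm, Imat.
  rewrite (sum_eq _ (fun k => if Nat.eqb k j then A i k else 0)).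
  - apply (sum_delta' (fun k => A i k)); auto.
  - intros k _. destruct (Nat.eqb k j); ring.
Qed.

Lemma inv_unique m Z X Y : matEq m (mm m Z X) Imat -> matEq m (mm m X Y) Imat -> matEq m Z Y.
Proof.
  intros H1 H2.
  apply matEq_trans with (mm m Z Imat); [apply matEq_sym, mm_I_r|].
  apply matEq_trans with (mm m Z (mm m X Y)); [apply mm_compat; [apply matEq_refl|apply matEq_sym; auto]|].
  apply matEq_trans with (mm m (mm m Z X) Y); [intros i j _ _; symmetry; apply mm_assoc|].
  apply matEq_trans with (mm m Imat Y); [apply mm_compat; [auto|apply matEq_refl]|].
  apply mm_I_l.
Qed.

Lemma mv_mm m A B a i : mv m (mm m A B) a i = mv m A (mv m B a) i.
Proof.
  unfold mv, mm.
  rewrite (sum_eq _ (fun j => sum_f_R0 (fun k => A i k * B k j * a j) m))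
    by (intros; apply sum_mul_r).
  rewrite sum_swap. apply sum_eq. intros k _. rewrite sum_mul_l. apply sum_eq. intros; ring.
Qed.

Lemma mv_compat m A A' a a' : matEq m A A' -> vecEq m a a' -> vecEq m (mv m A a) (mv m A' a').
Proof. intros H1 H2 i Hi. unfold mv. apply sum_eq. intros k Hk. rewrite H1, H2; auto. Qed.

Lemma mv_I m a : vecEq m (mv m Imat a) a.
Proof.
  intros i Hi. unfold mv, Imat.
  rewrite (sum_eq _ (fun k => if Nat.eqb i k then a k else 0)).
  - apply sum_delta; auto.
  - intros k _. destruct (Nat.eqb i k); ring.
Qed.

Lemma mv_inv m A B a : matEq m (mm m A B) Imat -> vecEq m (mv m A (mv m B a)) a.
Proof.
  intros H i Hi. rewrite <- mv_mm. apply (vecEq_trans m _ (mv m Imat a)).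
  - apply mv_compat; auto. apply vecEq_refl.
  - apply mv_I.
  - auto.
Qed.

Lemma dotJ_ext m a a' b b' : vecEq m a a' -> vecEq m b b' -> dotJ m a b = dotJ m a' b'.
Proof. intros H1 H2. unfold dotJ. apply sum_eq. intros. rewrite H1, H2; auto. Qed.

Lemma dotJ_sym m a b : dotJ m a b = dotJ m b a.
Proof. unfold dotJ. apply sum_eq. intros; ring. Qed.

Lemma dotJ_lin m a b c p q : dotJ m a (fun k => p * b k + q * c k) = p * dotJ m a b + q * dotJ m a c.
Proof.
  unfold dotJ. rewrite !sum_mul_l, <- sum_plus'. apply sum_eq. intros; ring.
Qed.

Lemma dotJ_lin_l m a b c p q : dotJ m (fun k => p * b k + q * c k) a = p * dotJ m b a + q * dotJ m c a.
Proof. rewrite dotJ_sym, dotJ_lin, (dotJ_sym m a b), (dotJ_sym m a c). reflexivity. Qed.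

Lemma dotJ_scal_l m a b c : dotJ m (fun k => c * b k) a = c * dotJ m b a.
Proof. unfold dotJ. rewrite sum_mul_l. apply sum_eq. intros; ring. Qed.

Lemma dotJ_scal_r m a b c : dotJ m a (fun k => c * b k) = c * dotJ m a b.
Proof. unfold dotJ. rewrite sum_mul_l. apply sum_eq. intros; ring. Qed.

Definition evec (i : nat) : vec := fun k => if Nat.eqb k i then 1 else 0.

Lemma dotJ_evec m a i : (i <= m)%nat -> dotJ m a (evec i) = Jsign i * a i.
Proof.
  intros H. unfold dotJ, evec.
  rewrite (sum_eq _ (fun k => if Nat.eqb k i then Jsign k * a k else 0)).
  - apply (sum_delta' (fun k => Jsign k * a k)); auto.
  - intros k _. destruct (Nat.eqb k i); ring.
Qed.

Lemma vecEq_of_dot m a b : (forall i, (i <= m)%nat -> dotJ m a (evec i) = dotJ m b (evec i)) -> vecEq m a b.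
Proof.
  intros H i Hi. specialize (H i Hi). rewrite !dotJ_evec in H by auto.
  pose proof (Jsign_nz i). apply Rmult_eq_reg_l with (Jsign i); auto.
Qed.

Lemma normal_par m n w : dotJ m n n = 1 ->
  (forall v, dotJ m v n = 0 -> dotJ m w v = 0) ->
  vecEq m w (fun k => dotJ m w n * n k).
Proof.
  intros Hn H. apply vecEq_of_dot. intros i Hi.
  set (v := fun k => 1 * evec i k + (- dotJ m (evec i) n) * n k).
  assert (Hv : dotJ m v n = 0).
  { unfold v. rewrite dotJ_lin_l, Hn. ring. }
  specialize (H v Hv). unfold v in H. rewrite dotJ_lin in H.
  rewrite dotJ_scal_l.
  rewrite (dotJ_sym m (evec i) n) in H. lra.
Qed.

Definition rowform m (X : mat) : Prop := forall i j, (i <= m)%nat -> (j <= m)%nat ->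
  sum_f_R0 (fun k => Jsign k * X i k * X j k) m = Jmat i j.
Definition colform m (X : mat) : Prop := forall i j, (i <= m)%nat -> (j <= m)%nat ->
  sum_f_R0 (fun k => Jsign k * X k i * X k j) m = Jmat i j.
Definition Ntr (X : mat) : mat := fun i j => Jsign i * X j i * Jsign j.

Lemma Jmat_J i j : Jmat i j * Jsign j = Imat i j.
Proof.
  unfold Jmat, Imat. destruct (Nat.eqb_spec i j); [subst; apply Jsign_sq|ring].
Qed.
Lemma J_Jmat i j : Jsign i * Jmat i j = Imat i j.
Proof.
  unfold Jmat, Imat. destruct (Nat.eqb_spec i j); [subst; apply Jsign_sq|ring].
Qed.
Lemma J_Imat i j : Jsign i * Imat i j = Jmat i j.
Proof. unfold Jmat, Imat. destruct (Nat.eqb_spec i j); ring. Qed.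

Lemma row_inv m X : rowform m X -> matEq m (mm m X (Ntr X)) Imat.
Proof.
  intros H i j Hi Hj. unfold mm, Ntr. rewrite <- Jmat_J, <- (H i j Hi Hj), sum_mul_r.
  apply sum_eq. intros; ring.
Qed.

Lemma col_inv m X : colform m X -> matEq m (mm m (Ntr X) X) Imat.
Proof.
  intros H i j Hi Hj. unfold mm, Ntr. rewrite <- J_Jmat, <- (H i j Hi Hj), sum_mul_l.
  apply sum_eq. intros; ring.
Qed.

Lemma inv_col m X : matEq m (mm m (Ntr X) X) Imat -> colform m X.
Proof.
  intros H i j Hi Hj. rewrite <- J_Imat, <- (H i j Hi Hj). unfold mm, Ntr. rewrite sum_mul_l.
  apply sum_eq. intros k _. replace (Jsign i * (Jsign i * X k i * Jsign k * X k j)) with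
    ((Jsign i * Jsign i) * (Jsign k * X k i * X k j)) by ring. rewrite Jsign_sq. ring.
Qed.

Lemma inv_row m X : matEq m (mm m X (Ntr X)) Imat -> rowform m X.
Proof.
  intros H i j Hi Hj. rewrite <- (Rmult_1_r (Jmat i j)), <- (Jsign_sq j), <- Rmult_assoc, Jmat_J.
  rewrite <- (H i j Hi Hj). unfold mm, Ntr. rewrite sum_mul_r.
  apply sum_eq. intros k _. replace (Jsign k * X i k * X j k) with
    (Jsign k * X i k * X j k * (Jsign j * Jsign j)) by (rewrite Jsign_sq; ring). ring.
Qed.

Lemma row_GL_col m X : rowform m X -> GLmat m X -> colform m X.
Proof.
  intros H [Y [H1 H2]]. apply inv_col.
  assert (E : matEq m Y (Ntr X)) by (apply (inv_unique m Y X); auto; apply row_inv; auto).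
  apply matEq_trans with (mm m Y X); auto.
  apply mm_compat; [apply matEq_sym; auto|apply matEq_refl].
Qed.

Lemma col_O1 m X : colform m X -> O1 m X.
Proof.
  intros H i j Hi Hj. rewrite <- (H i j Hi Hj). unfold mm, trm. apply sum_eq. intros k Hk.
  unfold Jmat at 1.
  rewrite (sum_eq _ (fun l => if Nat.eqb k l then Jsign k * X l j else 0)).
  - rewrite (sum_delta (fun l => Jsign k * X l j)) by auto. ring.
  - intros l _. destruct (Nat.eqb_spec k l); [subst; ring|ring].
Qed.

Lemma col_row_Ntr m X : colform m X -> rowform m (Ntr X).
Proof.
  intros H i j Hi Hj. unfold Ntr.
  assert (Jmat i j = Jsign i * Jsign j * Jmat i j) .
  { unfold Jmat. destruct (Nat.eqb_spec i j); [subst|ring]. 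
    replace (Jsign j * Jsign j * Jsign j) with ((Jsign j * Jsign j) * Jsign j) by ring. rewrite Jsign_sq. ring. }
  rewrite H0.
  rewrite <- (H i j Hi Hj), sum_mul_l. apply sum_eq. intros k _.
  replace (Jsign k * (Jsign i * X k i * Jsign k) * (Jsign j * X k j * Jsign k)) with
    ((Jsign k * Jsign k) * (Jsign i * Jsign j * (Jsign k * X k i * X k j))) by ring.
  rewrite Jsign_sq. ring.
Qed.

Lemma row_col_Ntr m X : rowform m X -> colform m (Ntr X).
Proof.
  intros H i j Hi Hj. unfold Ntr.
  assert (Jmat i j = Jsign i * Jsign j * Jmat i j) .
  { unfold Jmat. destruct (Nat.eqb_spec i j); [subst|ring]. 
    replace (Jsign j * Jsign j * Jsign j) with ((Jsign j * Jsign j) * Jsign j) by ring. rewrite Jsign_sq. ring. }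
  rewrite H0.
  rewrite <- (H i j Hi Hj), sum_mul_l. apply sum_eq. intros k _.
  replace (Jsign k * (Jsign k * X i k * Jsign i) * (Jsign k * X j k * Jsign j)) with
    ((Jsign k * Jsign k) * (Jsign i * Jsign j * (Jsign k * X i k * X j k))) by ring.
  rewrite Jsign_sq. ring.
Qed.

Lemma col_dot m X a b : colform m X -> dotJ m (mv m X a) (mv m X b) = dotJ m a b.
Proof.
  intros H. unfold dotJ, mv.
  rewrite (sum_eq _ (fun i => sum_f_R0 (fun j => sum_f_R0 (fun k => Jsign i * X i j * X i k * a j * b k) m) m)).
  2:{ intros i _. rewrite Rmult_assoc, sum_prod, sum_mul_l. apply sum_eq. intros j _.
      rewrite sum_mul_l. apply sum_eq. intros; ring. }
  rewrite sum_swap. apply sum_eq. intros j Hj.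
  rewrite sum_swap.
  rewrite (sum_eq _ (fun k => (sum_f_R0 (fun i => Jsign i * X i j * X i k) m) * (a j * b k))).
  2:{ intros k _. rewrite sum_mul_r. apply sum_eq. intros; ring. }
  rewrite (sum_eq _ (fun k => if Nat.eqb j k then Jsign j * a j * b k else 0)).
  - apply (sum_delta (fun k => Jsign j * a j * b k)); auto.
  - intros k Hk. rewrite H by auto. unfold Jmat. destruct (Nat.eqb j k); ring.
Qed.

Lemma row_T00 m X : rowform m X -> 1 <= X O O * X O O.
Proof.
  intros H. specialize (H O O (Nat.le_0_l _) (Nat.le_0_l _)).
  destruct m.
  - simpl in H. unfold Jmat in H. simpl in H. nra.
  - rewrite sum_shift in H. unfold Jmat in H. rewrite Nat.eqb_refl in H. change (Jsign O) with (-1) in H.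
    assert (0 <= sum_f_R0 (fun k => Jsign (S k) * X O (S k) * X O (S k)) m).
    { apply cond_pos_sum. intros k. simpl. nra. }
    lra.
Qed.

Definition blockInv (X : mat) : mat :=
  fun k j => X (S j) (S k) - X O (S k) * X (S j) O / X O O.

Lemma row_blockS_inv m' X : rowform (S m') X ->
  matEq m' (mm m' (blockS X) (blockInv X)) Imat.
Proof.
  intros H i j Hi Hj.
  pose proof (row_T00 _ X H) as Ha. assert (Ha0 : X O O <> 0) by (intro E; rewrite E in Ha; lra).
  pose proof (H (S i) (S j) ltac:(lia) ltac:(lia)) as H1.
  pose proof (H (S i) O ltac:(lia) ltac:(lia)) as H2.
  rewrite sum_shift in H1, H2. simpl Jsign in H1, H2.
  rewrite (sum_eq (fun k => 1 * X (S i) (S k) * X (S j) (S k)) (fun k => X (S i) (S k) * X (S j) (S k))) in H1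
    by (intros; ring).
  rewrite (sum_eq (fun k => 1 * X (S i) (S k) * X O (S k)) (fun k => X (S i) (S k) * X O (S k))) in H2
    by (intros; ring).
  unfold Jmat in H1, H2. simpl Nat.eqb in H1, H2. simpl Jsign in H1.
  unfold mm, blockS, blockInv.
  rewrite (sum_eq _ (fun k => X (S i) (S k) * X (S j) (S k) - (X (S j) O / X O O) * (X (S i) (S k) * X O (S k)))).
  2:{ intros. field. auto. }
  rewrite sum_minus', <- sum_mul_l.
  unfold Imat. destruct (Nat.eqb i j).
  - replace (sum_f_R0 (fun k => X (S i) (S k) * X (S j) (S k)) m') with (1 + X (S i) O * X (S j) O) by lra.
    replace (sum_f_R0 (fun k => X (S i) (S k) * X O (S k)) m') with (X (S i) O * X O O) by lra.
    field. auto.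
  - replace (sum_f_R0 (fun k => X (S i) (S k) * X (S j) (S k)) m') with (X (S i) O * X (S j) O) by lra.
    replace (sum_f_R0 (fun k => X (S i) (S k) * X O (S k)) m') with (X (S i) O * X O O) by lra.
    field. auto.
Qed.

Lemma row_det_nz m X : (1 <= m)%nat -> rowform m X -> det m (blockS X) <> 0.
Proof.
  intros Hm H. destruct m as [|m']; [lia|].
  pose proof (row_blockS_inv m' X H) as HI.
  assert (E : det (S m') (mm m' (blockS X) (blockInv X)) = 1).
  { rewrite <- (det_I (S m')). apply det_ext. intros i j Hi Hj. apply HI; lia. }
  rewrite det_mm in E. intro Z. rewrite Z in E. lra.
Qed.

Lemma deriv_sum (F : nat -> R -> R) (D : nat -> R) t n :
  (forall k, (k <= n)%nat -> derivable_pt_lim (F k) t (D k)) ->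
  derivable_pt_lim (fun r => sum_f_R0 (fun k => F k r) n) t (sum_f_R0 D n).
Proof.
  induction n; intros H; simpl.
  - apply H; lia.
  - apply (derivable_pt_lim_plus (fun r => sum_f_R0 (fun k => F k r) n) (F (S n))).
    + apply IHn. intros; apply H; lia.
    + apply H; lia.
Qed.

Lemma deriv_mult f g t a b : derivable_pt_lim f t a -> derivable_pt_lim g t b ->
  derivable_pt_lim (fun r => f r * g r) t (a * g t + f t * b).
Proof. intros. apply (derivable_pt_lim_mult f g); auto. Qed.

Lemma deriv_const c t : derivable_pt_lim (fun _ => c) t 0.
Proof. apply derivable_pt_lim_const. Qed.

Lemma deriv_ext f g t l : (forall r, f r = g r) -> derivable_pt_lim f t l -> derivable_pt_lim g t l.
Proof. intros E H. replace g with f; auto. apply functional_extensionality. auto. Qed.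

Lemma deriv_unique f t l1 l2 : derivable_pt_lim f t l1 -> derivable_pt_lim f t l2 -> l1 = l2.
Proof. apply uniqueness_limite. Qed.

Lemma deriv_loc tau f g t l : 0 < t < tau -> (forall r, inI tau r -> f r = g r) ->
  derivable_pt_lim f t l -> derivable_pt_lim g t l.
Proof.
  intros Ht E H eps Heps. destruct (H eps Heps) as [d Hd].
  assert (Hp : 0 < Rmin d (Rmin t (tau - t))).
  { apply Rmin_pos; [apply cond_pos|apply Rmin_pos; lra]. }
  exists (mkposreal _ Hp). intros h Hh0 Hh. simpl in Hh.
  pose proof (Rmin_l d (Rmin t (tau - t))). pose proof (Rmin_r d (Rmin t (tau - t))).
  pose proof (Rmin_l t (tau - t)). pose proof (Rmin_r t (tau - t)).
  assert (Habs : Rabs h < d) by lra.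
  rewrite <- !E. { apply Hd; auto. }
  - split; lra.
  - unfold Rabs in Hh; destruct Rcase_abs in Hh; split; lra.
Qed.

Lemma mv_deriv m A Ad Z Zd t : mderiv m A t Ad -> vderiv m Z t Zd ->
  vderiv m (fun r => mv m (A r) (Z r)) t (fun i => mv m Ad (Z t) i + mv m (A t) Zd i).
Proof.
  intros HA HZ i Hi. unfold mv. rewrite <- sum_plus'.
  apply (deriv_sum (fun k r => A r i k * Z r k)). intros k Hk.
  apply deriv_mult; auto.
Qed.

Lemma mderiv_Ntr m A Ad t : mderiv m A t Ad -> mderiv m (fun r => Ntr (A r)) t (Ntr Ad).
Proof.
  intros H i j Hi Hj. unfold Ntr.
  apply (deriv_ext (fun r => Jsign j * (Jsign i * A r j i))). { intros; ring. }
  replace (Jsign i * Ad j i * Jsign j) with (Jsign j * (Jsign i * Ad j i)) by ring.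
  apply derivable_pt_lim_scal. apply derivable_pt_lim_scal. auto.
Qed.

Lemma null_add_point N p : null N -> null (fun t => N t \/ t = p).
Proof.
  intros H eps Heps. destruct (H eps Heps) as [c [d [H1 [H2 H3]]]].
  exists (fun k => match k with O => p | S k => c k end).
  exists (fun k => match k with O => p | S k => d k end).
  split; [|split].
  - intros [|k]; [lra|auto].
  - intros t [Nt|E].
    + destruct (H2 t Nt) as [k Hk]. exists (S k). auto.
    + exists O. subst; lra.
  - intros [|n]; [simpl; lra|]. rewrite sum_shift. cbv beta iota. replace (p - p) with 0 by ring.
    specialize (H3 n). lra.
Qed.

Lemma mmJ m A l k : (k <= m)%nat -> mm m A Jmat l k = A l k * Jsign k.
Proof.
  intros Hk. unfold mm, Jmat.
  rewrite (sum_eq _ (fun p => if Nat.eqb p k then A l p * Jsign p else 0)).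
  - apply (sum_delta' (fun p => A l p * Jsign p)); auto.
  - intros p _. destruct (Nat.eqb p k); ring.
Qed.

Lemma wedgeJ_mv m u x0 y : vecEq m (mv m (mm m (wedge u x0) Jmat) y)
  (fun i => u i * dotJ m x0 y - x0 i * dotJ m u y).
Proof.
  intros i Hi. unfold mv, dotJ. rewrite !sum_mul_l, <- sum_minus'.
  apply sum_eq. intros k Hk. rewrite mmJ by auto. unfold wedge. ring.
Qed.

Lemma deriv_alg m (R : mat) u x0 i j : (i <= m)%nat -> (j <= m)%nat ->
  let Rp := mm m R (mm m (wedge u x0) Jmat) in
  sum_f_R0 (fun k => Jsign k * (Rp i k * R j k + R i k * Rp j k)) m = 0.
Proof.
  intros Hi Hj Rp.
  assert (E : forall a k, (k <= m)%nat -> Rp a k = sum_f_R0 (fun l => R a l * wedge u x0 l k * Jsign k) m).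
  { intros a k Hk. unfold Rp, mm at 1. apply sum_eq. intros l _. rewrite mmJ by auto. ring. }
  rewrite (sum_eq _ (fun k => sum_f_R0 (fun l => R i l * wedge u x0 l k * R j k) m +
                              sum_f_R0 (fun l => R i k * R j l * wedge u x0 l k) m)).
  2:{ intros k Hk. rewrite !E by auto. rewrite Rmult_plus_distr_l.
      rewrite sum_mul_r, sum_mul_l, sum_mul_l, sum_mul_l. f_equal; apply sum_eq; intros l _;
      rewrite <- (Rmult_1_r (R i l * wedge u x0 l k * R j k)) || rewrite <- (Rmult_1_r (R i k * R j l * wedge u x0 l k));
      rewrite <- (Jsign_sq k); ring. }
  rewrite sum_plus'. rewrite (sum_swap (fun k l => R i k * R j l * wedge u x0 l k)).
  rewrite <- sum_plus'. rewrite <- (sum_zero m). apply sum_eq. intros k _.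
  rewrite <- sum_plus'. rewrite <- (sum_zero m). apply sum_eq. intros l _.
  unfold wedge. ring.
Qed.

Lemma ntr_deriv_alg m (R : mat) u x0 z :
  vecEq m (mv m (Ntr (mm m R (mm m (wedge u x0) Jmat))) z)
    (fun i => x0 i * dotJ m u (mv m (Ntr R) z) - u i * dotJ m x0 (mv m (Ntr R) z)).
Proof.
  intros i Hi.
  set (T := fun k => sum_f_R0 (fun j => R j k * Jsign j * z j) m).
  transitivity (sum_f_R0 (fun k => wedge u x0 k i * T k) m).
  - unfold mv, Ntr, mm at 1, T.
    rewrite (sum_eq _ (fun j => sum_f_R0 (fun k => R j k * wedge u x0 k i * Jsign j * z j) m)).
    2:{ intros j Hj. rewrite sum_mul_l, sum_mul_r, sum_mul_r. apply sum_eq. intros k _.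
        rewrite mmJ by auto.
        replace (Jsign i * (R j k * (wedge u x0 k i * Jsign i)) * Jsign j * z j) with
          ((Jsign i * Jsign i) * (R j k * wedge u x0 k i * Jsign j * z j)) by ring.
        rewrite Jsign_sq. ring. }
    rewrite sum_swap. apply sum_eq. intros k _. rewrite sum_mul_l. apply sum_eq. intros; ring.
  - unfold dotJ. rewrite !sum_mul_l, <- sum_minus'. apply sum_eq. intros k Hk.
    assert (Ey : mv m (Ntr R) z k = Jsign k * T k).
    { unfold mv, Ntr, T. rewrite sum_mul_l. apply sum_eq. intros; ring. }
    rewrite Ey. unfold wedge.
    replace (x0 i * (Jsign k * u k * (Jsign k * T k)) - u i * (Jsign k * x0 k * (Jsign k * T k)))
      with ((Jsign k * Jsign k) * ((u k * x0 i - x0 k * u i) * T k)) by ring.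
    rewrite Jsign_sq. ring.
Qed.

Lemma par_zero m n D : dotJ m n n = 1 ->
  (forall v, dotJ m v n = 0 -> dotJ m D v = 0) -> dotJ m D n = 0 -> vecEq m D vzero.
Proof.
  intros H1 H2 H3 i Hi. rewrite (normal_par m n D H1 H2 i Hi), H3. unfold vzero. ring.
Qed.

Lemma AC_det tau n : forall (A : R -> mat),
  (forall i j, (i < n)%nat -> (j < n)%nat -> AC tau (fun t => A t i j)) ->
  AC tau (fun t => det n (A t)).
Proof.
  induction n; intros A H.
  - simpl. apply AC_const.
  - change (AC tau (fun t => sum_f_R0 (fun j => (-1)^j * A t O j * det n (minor0 j (A t))) n)).
    apply (AC_sum tau (fun j t => (-1)^j * A t O j * det n (minor0 j (A t)))).
    intros j Hj. apply AC_mult.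
    + apply AC_scal. apply H; lia.
    + apply (IHn (fun t => minor0 j (A t))). intros i k Hi Hk. unfold minor0.
      destruct (Nat.ltb k j); apply H; lia.
Qed.

Lemma deriv_l_eq f t l l' : derivable_pt_lim f t l -> l = l' -> derivable_pt_lim f t l'.
Proof. intros H E. subst. auto. Qed.

Lemma rowform_ext m A B : matEq m A B -> rowform m A -> rowform m B.
Proof. intros E H i j Hi Hj. rewrite <- (H i j Hi Hj). apply sum_eq. intros k Hk. rewrite !E; auto. Qed.

Lemma colform_ext m A B : matEq m A B -> colform m A -> colform m B.
Proof. intros E H i j Hi Hj. rewrite <- (H i j Hi Hj). apply sum_eq. intros k Hk. rewrite !E; auto. Qed.

Lemma dotJ_add_l m a b v : dotJ m (fun i => a i + b i) v = dotJ m a v + dotJ m b v.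
Proof. unfold dotJ. rewrite <- sum_plus'. apply sum_eq. intros; ring. Qed.

Lemma dotJ_sub_l m a b v : dotJ m (vsub a b) v = dotJ m a v - dotJ m b v.
Proof. unfold dotJ, vsub. rewrite <- sum_minus'. apply sum_eq. intros; ring. Qed.

Lemma vecEq_sub_zero m a b : vecEq m (vsub a b) vzero -> vecEq m a b.
Proof. intros H i Hi. specialize (H i Hi). unfold vsub, vzero in H. lra. Qed.

Lemma det_at_I m (X : mat) : matEq m X Imat -> det m (blockS X) = 1.
Proof.
  intros H. rewrite <- (det_I m). apply det_ext. intros i j Hi Hj. unfold blockS.
  rewrite H by lia. unfold Imat. simpl. reflexivity.
Qed.

Lemma dotJ_comb m a b c1 c2 v : dotJ m (fun i => a i * c1 - b i * c2) v = c1 * dotJ m a v - c2 * dotJ m b v.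
Proof. unfold dotJ. rewrite !sum_mul_l, <- sum_minus'. apply sum_eq. intros; ring. Qed.

Theorem mainTheorem2 (m : nat) (x0 : vec) (tau : R) (u s : R -> vec)
    (Rm : R -> mat) :
  (1 <= m)%nat ->
  pt (lsphere m) x0 ->
  ACv m tau u ->
  (forall t, inI tau t -> dotJ m (u t) x0 = 0) ->
  ACv m tau s -> ACm m tau Rm ->
  (forall t, inI tau t -> GLmat m (Rm t)) ->
  AE tau (fun t => vderiv m s t (u t) /\
                   mderiv m Rm t (mm m (Rm t) (mm m (wedge (u t) x0) Jmat))) ->
  vecEq m (s 0) vzero ->
  matEq m (Rm 0) Imat ->
  (forall t, inI tau t -> Opp m (Rm t)) /\
  forall Rinv : R -> mat,
    (forall t, inI tau t ->
       matEq m (mm m (Rinv t) (Rm t)) Imat /\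
       matEq m (mm m (Rm t) (Rinv t)) Imat) ->
    (forall c : Gchoice,
       rolling c m tau (lsphere m) (affTan m x0)
         (fun t => mv m (Rm t) x0) s Rinv) /\
    (forall t, inI tau t ->
       vecEq m (gact m (s t) (Rinv t) (mv m (Rm t) x0)) (vadd (s t) x0)).
Proof.
  intros Hm Hx0 Hu Hux Hs HR HGL [N [HN HAE]] Hs0 HR0.
  simpl in Hx0.
  assert (Hrow : forall t, inI tau t -> rowform m (Rm t)).
  { intros t Ht i j Hi Hj.
    set (g := fun r => sum_f_R0 (fun k => Jsign k * Rm r i k * Rm r j k) m).
    assert (Hg0 : g 0 = Jmat i j).
    { unfold g. rewrite (sum_eq _ (fun k => if Nat.eqb i k then Jsign k * Imat j k else 0)).
      - rewrite (sum_delta (fun k => Jsign k * Imat j k)) by auto.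
        unfold Imat, Jmat. rewrite Nat.eqb_sym. destruct (Nat.eqb_spec i j); [subst; ring| ring].
      - intros k Hk. rewrite !HR0 by auto. unfold Imat at 1. destruct (Nat.eqb i k); ring. }
    rewrite <- Hg0. change (g t = g 0). apply (AC_deriv0 tau g N); auto.
    - unfold g. apply (AC_sum tau (fun k r => Jsign k * Rm r i k * Rm r j k)).
      intros k Hk. apply AC_mult; [apply AC_scal; apply HR; auto| apply HR; auto].
    - intros r Hr HNr. destruct (HAE r Hr HNr) as [_ Hd].
      pose proof (deriv_alg m (Rm r) (u r) x0 i j Hi Hj) as E. cbv zeta in E.
      unfold g. eapply deriv_l_eq; [|exact E].
      apply (deriv_sum (fun k q => Jsign k * Rm q i k * Rm q j k)). intros k Hk.
      apply (deriv_ext (fun q => Jsign k * (Rm q i k * Rm q j k))); [intros; ring|].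
      apply derivable_pt_lim_scal. apply deriv_mult; apply Hd; auto. }
  assert (Hcol : forall t, inI tau t -> colform m (Rm t)).
  { intros t Ht. apply row_GL_col; auto. }
  assert (Hopp : forall t, inI tau t -> Opp m (Rm t)).
  { intros t Ht. assert (H0 : inI tau 0) by (destruct Ht; split; lra).
    split; [apply col_O1; auto|split].
    - apply (sign_persist tau (fun t => Rm t O O)); auto.
      + apply HR; lia.
      + intros r Hr E. pose proof (row_T00 m _ (Hrow r Hr)). rewrite E in H. lra.
      + rewrite HR0 by lia. unfold Imat. simpl. lra.
    - apply (sign_persist tau (fun t => det m (blockS (Rm t)))); auto.
      + apply (AC_det tau m (fun t => blockS (Rm t))). intros i j Hi Hj. apply HR; lia.
      + intros r Hr. apply row_det_nz; auto.
      + rewrite det_at_I; auto. lra. }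
  split; [exact Hopp|].
  intros Rinv HRinv.
  assert (HRiN : forall t, inI tau t -> matEq m (Rinv t) (Ntr (Rm t))).
  { intros t Ht. apply (inv_unique m (Rinv t) (Rm t)); [apply HRinv; auto|apply row_inv; auto]. }
  assert (HRirow : forall t, inI tau t -> rowform m (Rinv t)).
  { intros t Ht. apply (rowform_ext m (Ntr (Rm t))); [apply matEq_sym; auto|apply col_row_Ntr; auto]. }
  assert (HRicol : forall t, inI tau t -> colform m (Rinv t)).
  { intros t Ht. apply (colform_ext m (Ntr (Rm t))); [apply matEq_sym; auto|apply row_col_Ntr; auto]. }
  assert (HRiAC : forall i j, (i <= m)%nat -> (j <= m)%nat -> AC tau (fun t => Rinv t i j)).
  { intros i j Hi Hj. apply (AC_ext tau (fun t => Jsign i * Rm t j i * Jsign j)).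
    - intros t Ht. rewrite HRiN; auto.
    - apply AC_mult; [apply AC_scal; apply HR; auto|apply AC_const]. }
  assert (HoppRi : forall t, inI tau t -> Opp m (Rinv t)).
  { intros t Ht. assert (H0 : inI tau 0) by (destruct Ht; split; lra).
    assert (HRi0 : matEq m (Rinv 0) Imat).
    { apply matEq_trans with (Ntr (Rm 0)); [apply HRiN; auto|].
      intros i j Hi Hj. unfold Ntr. rewrite HR0 by auto. unfold Imat.
      destruct (Nat.eqb_spec j i); [subst; rewrite Nat.eqb_refl; rewrite Rmult_1_r; apply Jsign_sq|].
      replace (Nat.eqb i j) with false; [ring|symmetry; apply Nat.eqb_neq; auto]. }
    split; [apply col_O1; auto|split].
    - unfold blockT. rewrite HRiN by (auto; lia). unfold Ntr. simpl.
      destruct (Hopp t Ht) as [_ [HT _]]. unfold blockT in HT. lra.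
    - apply (sign_persist tau (fun t => det m (blockS (Rinv t)))); auto.
      + apply (AC_det tau m (fun t => blockS (Rinv t))). intros i j Hi Hj. apply HRiAC; lia.
      + intros r Hr. apply row_det_nz; auto.
      + rewrite det_at_I; auto. lra. }
  assert (Hsperp : forall t, inI tau t -> dotJ m (s t) x0 = 0).
  { intros t Ht.
    set (g := fun r => dotJ m (s r) x0).
    assert (Hg0 : g 0 = 0).
    { unfold g, dotJ. transitivity (sum_f_R0 (fun _ => 0) m); [|apply sum_zero].
      apply sum_eq. intros k Hk. rewrite Hs0 by auto. unfold vzero. ring. }
    rewrite <- Hg0. change (g t = g 0). apply (AC_deriv0 tau g N); auto.
    - unfold g, dotJ. apply (AC_sum tau (fun k r => Jsign k * s r k * x0 k)).
      intros k Hk. apply AC_mult; [apply AC_scal; apply Hs; auto| apply AC_const].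
    - intros r Hr HNr. destruct (HAE r Hr HNr) as [Hd _].
      unfold g, dotJ. eapply deriv_l_eq.
      + apply (deriv_sum (fun k q => Jsign k * s q k * x0 k)). intros k Hk.
        apply deriv_mult; [apply derivable_pt_lim_scal; apply Hd; auto|apply deriv_const].
      + transitivity (dotJ m (u r) x0); [|apply Hux; auto]. unfold dotJ. apply sum_eq. intros; ring. }
  assert (Hxh : forall t, inI tau t ->
    vecEq m (gact m (s t) (Rinv t) (mv m (Rm t) x0)) (vadd (s t) x0)).
  { intros t Ht i Hi. unfold gact, vadd. rewrite (mv_inv m (Rinv t) (Rm t) x0); auto.
    apply HRinv; auto. }
  split; [|exact Hxh].
  intros c. unfold rolling. cbv zeta.
  split.
  { intros i Hi. unfold mv. apply (AC_sum tau (fun j t => Rm t i j * x0 j)).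
    intros j Hj. apply AC_mult; [apply HR; auto|apply AC_const]. }
  split; [exact Hs|].
  split; [intros i j Hi Hj; apply HRiAC; auto|].
  split.
  { intros t Ht. simpl. rewrite col_dot; auto. }
  split.
  { intros t Ht. destruct c; left; apply HoppRi; auto. }
  exists (fun t => (N t \/ t = 0) \/ t = tau). split.
  { apply null_add_point. apply null_add_point. auto. }
  intros t Ht HN'.
  assert (HNt : ~ N t) by tauto.
  assert (Htt : 0 < t < tau) by (destruct Ht; split; [destruct (Req_dec t 0); [tauto|lra]|destruct (Req_dec t tau); [tauto|lra]]).
  destruct (HAE t Ht HNt) as [Hsd HRd].
  set (Rp := mm m (Rm t) (mm m (wedge (u t) x0) Jmat)).
  assert (F1 : vecEq m (mv m (Rinv t) (mv m (Rm t) x0)) x0) by (apply mv_inv; apply HRinv; auto).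
  assert (F2 : forall a, vecEq m (mv m (Rm t) (mv m (Rinv t) a)) a) by (intro; apply mv_inv; apply HRinv; auto).
  assert (F2' : forall a, vecEq m (mv m (Rinv t) (mv m (Rm t) a)) a) by (intro; apply mv_inv; apply HRinv; auto).
  assert (F3 : forall a b, dotJ m (mv m (Rinv t) a) (mv m (Rinv t) b) = dotJ m a b) by (intros; apply col_dot; auto).
  assert (F4 : forall a b, dotJ m (mv m (Rm t) a) (mv m (Rm t) b) = dotJ m a b) by (intros; apply col_dot; auto).
  assert (Ftan : forall v, dotJ m v x0 = 0 -> dotJ m (mv m (Rm t) v) (mv m (Rm t) x0) = 0).
  { intros v Hv. rewrite F4. auto. }
  assert (Fx0 : forall a, dotJ m a x0 = dotJ m a (mv m (Rinv t) (mv m (Rm t) x0))).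
  { intros. apply dotJ_ext; [apply vecEq_refl|apply vecEq_sym; auto]. }
  assert (Fx0' : forall a, dotJ m x0 a = dotJ m (mv m (Rinv t) (mv m (Rm t) x0)) a).
  { intros. apply dotJ_ext; [apply vecEq_sym; auto|apply vecEq_refl]. }
  assert (HWf : forall Z Zd Wd, vderiv m Z t Zd ->
     vderiv m (fun r => mv m (Rinv r) (Z r)) t Wd -> forall v,
     dotJ m Wd v = dotJ m (u t) (mv m (Rinv t) (Z t)) * dotJ m x0 v
                   - dotJ m x0 (mv m (Rinv t) (Z t)) * dotJ m (u t) v + dotJ m (mv m (Rinv t) Zd) v).
  { intros Z Zd Wd HZd HWd v.
    assert (EW : vecEq m Wd (fun i => mv m (Ntr Rp) (Z t) i + mv m (Ntr (Rm t)) Zd i)).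
    { intros i Hi. apply (deriv_unique (fun r => mv m (Rinv r) (Z r) i) t); [apply HWd; auto|].
      apply (deriv_loc tau (fun r => mv m (Ntr (Rm r)) (Z r) i)); auto.
      - intros r Hr. apply mv_compat; auto. apply matEq_sym; auto. apply vecEq_refl.
      - apply (mv_deriv m (fun r => Ntr (Rm r)) (Ntr Rp) Z Zd t); auto. apply mderiv_Ntr. auto. }
    rewrite (dotJ_ext m Wd _ v v EW (vecEq_refl m v)), dotJ_add_l.
    assert (EN : vecEq m (mv m (Ntr (Rm t)) (Z t)) (mv m (Rinv t) (Z t))).
    { apply mv_compat; [apply matEq_sym; auto|apply vecEq_refl]. }
    unfold Rp.
    rewrite (dotJ_ext m _ _ v v (ntr_deriv_alg m (Rm t) (u t) x0 (Z t)) (vecEq_refl m v)).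
    rewrite dotJ_comb.
    rewrite (dotJ_ext m (mv m (Ntr (Rm t)) Zd) (mv m (Rinv t) Zd) v v).
    2:{ apply mv_compat; [apply matEq_sym; auto|apply vecEq_refl]. }
    2:{ apply vecEq_refl. }
    rewrite (dotJ_ext m (u t) (u t) _ _ (vecEq_refl m _) EN).
    rewrite (dotJ_ext m x0 x0 _ _ (vecEq_refl m _) EN). ring. }
  split; [|split; [|split; [|split; [|split; [|split]]]]].
  -
    simpl. rewrite <- (Hsperp t Ht). apply dotJ_ext; [|apply vecEq_refl].
    intros i Hi. unfold vsub, gact, vadd. rewrite F1 by auto. ring.
  -
    simpl. intros v Hv. rewrite Fx0, F3. auto.
  - simpl. intros w Hw. exists (mv m (Rm t) w). split; [apply Ftan; auto|apply F2'].
  -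
    exists (Rinv t). split; [destruct c; left; apply HoppRi; auto|].
    split; [intros; apply vecEq_refl|]. simpl. auto.
  -
    exists (fun i => mv m Rp x0 i + mv m (Rm t) vzero i), (u t). split; [|split].
    + apply (mv_deriv m Rm Rp (fun _ => x0) (fun _ => 0)); auto. intros i Hi. apply deriv_const.
    + intros i Hi. apply (deriv_loc tau (fun r => s r i + x0 i)); auto.
      * intros r Hr. symmetry. apply (Hxh r Hr i Hi).
      * eapply deriv_l_eq; [apply derivable_pt_lim_plus; [apply Hsd; auto|apply deriv_const]|ring].
    + apply vecEq_sym.
      apply vecEq_trans with (mv m (Rinv t) (mv m Rp x0)).
      { apply mv_compat; [apply matEq_refl|]. intros i Hi. unfold mv at 2, vzero.
        rewrite (sum_eq _ (fun _ => 0)); [rewrite sum_zero; ring|intros; ring]. }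
      apply vecEq_trans with (mv m (Rinv t) (mv m (Rm t) (mv m (mm m (wedge (u t) x0) Jmat) x0))).
      { apply mv_compat; [apply matEq_refl|]. intros i Hi. unfold Rp. apply mv_mm. }
      eapply vecEq_trans; [apply F2'|].
      eapply vecEq_trans; [apply wedgeJ_mv|].
      intros i Hi. rewrite Hx0, (Hux t Ht). ring.
  -
    intros Z HZ HZt Zd Wd HZd HWd p q Hp Hpn Hq Hqn. simpl in Hp, Hpn, Hq, Hqn.
    apply vecEq_sub_zero. apply (par_zero m x0); auto.
    + intros v Hv. rewrite dotJ_sub_l.
      specialize (Hqn v Hv). rewrite dotJ_sub_l in Hqn.
      rewrite (HWf Z Zd Wd HZd HWd v) in Hqn.
      assert (E1 : dotJ m x0 v = 0) by (rewrite dotJ_sym; auto).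
      assert (E2 : dotJ m x0 (mv m (Rinv t) (Z t)) = 0).
      { rewrite Fx0', F3, dotJ_sym. apply (HZt t Ht). }
      assert (E3 : dotJ m (mv m (Rinv t) Zd) v = dotJ m (mv m (Rinv t) p) v).
      { assert (Ev : forall a, dotJ m a v = dotJ m a (mv m (Rinv t) (mv m (Rm t) v))).
        { intros. apply dotJ_ext; [apply vecEq_refl|apply vecEq_sym; auto]. }
        rewrite !Ev, !F3.
        specialize (Hpn (mv m (Rm t) v) (Ftan v Hv)). rewrite dotJ_sub_l in Hpn. lra. }
      rewrite E1, E2, E3 in Hqn. lra.
    + rewrite dotJ_sub_l, Fx0, F3, Hp, Hq. ring.
  -
    intros Psi HPs HPst Pd Wd HPd HWd p q Hp Hpt Hq Hqt. simpl in Hp, Hpt, Hq, Hqt.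
    apply vecEq_sub_zero. apply (par_zero m x0); auto.
    + intros v Hv. rewrite dotJ_sub_l, (Hq v Hv).
      assert (Ev : dotJ m (mv m (Rinv t) p) v = dotJ m (mv m (Rinv t) p) (mv m (Rinv t) (mv m (Rm t) v))).
      { apply dotJ_ext; [apply vecEq_refl|apply vecEq_sym; auto]. }
      rewrite Ev, F3, (Hp _ (Ftan v Hv)). ring.
    + rewrite dotJ_sub_l, Fx0, F3.
      rewrite dotJ_sub_l in Hpt, Hqt.
      rewrite (HWf Psi Pd Wd HPd HWd x0) in Hqt.
      assert (E1 : dotJ m (u t) (mv m (Rinv t) (Psi t)) = 0).
      { rewrite <- F4.
        rewrite (dotJ_ext m _ (mv m (Rm t) (u t)) _ (Psi t) (vecEq_refl m _) (F2 _)).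
        rewrite dotJ_sym. apply (HPst t Ht). simpl. apply Ftan. apply Hux; auto. }
      rewrite E1, Hx0, (Hux t Ht) in Hqt.
      rewrite Fx0, F3 in Hqt. lra.
Qed.
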